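(* Let $\eta=\frac{1+\sqrt5}{2}$ and $N=\mathbf{Z}[\eta]=\mathbf{Z}e_1\oplus\mathbf{Z}e_2$ with $e_1=1$, $e_2=\eta$. Let $b$ be the symmetric bilinear form on $N$ whose Gram matrix with respect to $(e_1,e_2)$ is $\begin{pmatrix}4&2\\2&-4\end{pmatrix}$. Then: \begin{enumerate} \item $(N,b)$ is an even hyperbolic lattice, and there is no $x\in N$ with $b(x,x)\in\{0,2,-2\}$. \item Multiplication by $\eta^6$ is an isometry of $(N,b)$. Its characteristic polynomial is $t^2-18t+1$, and it acts on the discriminant group $N^*/N$ as $-\mathrm{id}_{N^*/N}$. \end{enumerate}
   Context: $(N,b)$ is an even hyperbolic lattice if $b(x,x)$ is even for all $x\in N$ and $b$ has signature $(1,1)$. Via $b$ one has $N\subset N^*=\mathrm{Hom}_{\mathbf{Z}}(N,\mathbf{Z})\subset N\otimes\mathbf{Q}$, and the discriminant group is $N^*/N$. An isometry of $(N,b)$ is a $\mathbf{Z}$-module automorphism preserving $b$, and it induces an automorphism of $N^*/N$. Multiplication by $\eta^6$ is the map $p(\eta)\mapsto\eta^6p(\eta)$ on $N$. *)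

(* Defs.v *)
From mathcomp Require Import all_boot all_order all_algebra.
Set Implicit Arguments. Unset Strict Implicit. Unset Printing Implicit Defensive.
Import Order.TTheory GRing.Theory Num.Theory.
Local Open Scope ring_scope.

(* N (x) Q = Q(eta), eta = (1+sqrt 5)/2, written in the basis e1 = 1, e2 = eta:
   the pair (a, c) stands for a + c*eta.  Multiplication uses eta^2 = eta + 1. *)
Definition Qeta := (rat * rat)%type.

Definition qadd (x y : Qeta) : Qeta := (x.1 + y.1, x.2 + y.2).
Definition qmul (x y : Qeta) : Qeta :=
  (x.1 * y.1 + x.2 * y.2, x.1 * y.2 + x.2 * y.1 + x.2 * y.2).
Definition qone : Qeta := (1, 0).
Definition eta : Qeta := (0, 1).
Definition qpow (x : Qeta) (n : nat) : Qeta := iter n (qmul x) qone.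

Definition inN (x : Qeta) : Prop := (x.1 \is a Num.int) /\ (x.2 \is a Num.int).

Definition b (x y : Qeta) : rat :=
  4 * x.1 * y.1 + 2 * x.1 * y.2 + 2 * x.2 * y.1 - 4 * x.2 * y.2.

Definition inDual (y : Qeta) : Prop := forall x, inN x -> b y x \is a Num.int.

Definition integral_form : Prop := forall x y, inN x -> inN y -> b x y \is a Num.int.
Definition even_form : Prop := forall x, inN x -> exists k : int, b x x = 2 * k%:~R.

Definition signature_1_1 : Prop :=
  exists x y : Qeta, b x y = 0 /\ 0 < b x x /\ b y y < 0.

Definition even_hyperbolic_lattice : Prop :=
  integral_form /\ even_form /\ signature_1_1.

Definition isometry_N (f : Qeta -> Qeta) : Prop :=
  [/\ forall x, inN x -> inN (f x),
      forall y, inN y -> exists x, inN x /\ f x = y,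
      forall x y, inN x -> inN y -> f x = f y -> x = y,
      forall x y, inN x -> inN y -> f (qadd x y) = qadd (f x) (f y)
    & forall x y, inN x -> inN y -> b (f x) (f y) = b x y].

Definition e_ (j : 'I_2) : Qeta := if j == 0 then (1, 0) else (0, 1).
Definition mat_of (f : Qeta -> Qeta) : 'M[rat]_2 :=
  \matrix_(i < 2, j < 2) (if i == 0 then (f (e_ j)).1 else (f (e_ j)).2).

Definition acts_as_minus_id_on_disc (f : Qeta -> Qeta) : Prop :=
  forall y, inDual y -> inN (qadd (f y) y).

Definition mul_eta6 (x : Qeta) : Qeta := qmul (qpow eta 6) x.

(* Main.v *)
Require Import Defs.
From mathcomp Require Import all_boot all_order all_algebra ring lra zify.
Import Order.TTheory GRing.Theory Num.Theory.
Local Open Scope ring_scope.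
Lemma m6E x : mul_eta6 x = (5*x.1+8*x.2, 8*x.1+13*x.2).
Proof. rewrite /mul_eta6 /qpow /qmul /eta /qone /=. congr (_,_); ring. Qed.
Lemma matE : mat_of mul_eta6 = \matrix_(i<2,j<2) (if i==0 then (if j==0 then 5%:R else 8%:R) else (if j == 0 then 8%:R else 13%:R)).
Proof.
apply/matrixP => i j; rewrite !mxE m6E /e_.
by case: i => [[|[|]]] //= _; case: j => [[|[|]]] //= _; rewrite !(mulr1, mulr0, addr0, add0r).
Qed.
Lemma cp : char_poly (mat_of mul_eta6) = 'X^2 - 18%:P * 'X + 1.
Proof.
rewrite matE /char_poly /char_poly_mx (expand_det_row _ ord0) !big_ord_recl big_ord0.
rewrite /cofactor !det_mx11 !mxE /= !polyC_natr /bump /=; ring.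
Qed.

Lemma inNP x : inN x -> exists a c : int, x = (a%:~R, c%:~R).
Proof. by case=> /intrP[a ha] /intrP[c hc]; exists a, c; rewrite -ha -hc -surjective_pairing. Qed.

Lemma norm_nz (a c : int) : a * a + a * c - c * c = 0 -> a = 0 /\ c = 0.
Proof.
move=> h.
have h2 : (2*a+c)*(2*a+c) = 5*(c*c) by nia.
move/(congr1 absz): h2; rewrite !abszM /= => h3.
case: (posnP `|c|%N) => hc.
  move: h3; rewrite hc muln0 => /eqP; rewrite muln_eq0 orbb => /eqP hp.
  move/eqP: hc; rewrite absz_eq0 => /eqP hc; subst c.
  move/eqP: hp; rewrite absz_eq0 => /eqP; lia.
have hp : (0 < `|(2*a+c)%R|)%N.
  rewrite lt0n; apply/negP => /eqP h0; move: h3; rewrite h0 /=; lia.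
move/(congr1 (logn 5)): h3; rewrite lognM // ?muln_gt0 ?hc ?hp // lognM // ?muln_gt0 ?hc //.
rewrite lognM // (@logn_prime 5 5) //=; lia.
Qed.

Lemma isint (x : rat) : (exists a : int, x = a%:~R) -> x \is a Num.int.
Proof. by move=> [a ->]; apply: rpred_int. Qed.

Theorem corollary3p4 :
  (even_hyperbolic_lattice /\
   (forall x, inN x -> x <> (0, 0) -> b x x \notin [:: 0; 2; -2]))
  /\
  [/\ isometry_N mul_eta6,
      char_poly (mat_of mul_eta6) = 'X^2 - 18%:P * 'X + 1
    & acts_as_minus_id_on_disc mul_eta6].
Proof.
split; [split; [split; [|split]|] | split].
- move=> x y /inNP[a [c ->]] /inNP[d [e ->]]; apply: isint.
  exists (4*a*d + 2*a*e + 2*c*d - 4*c*e); rewrite /b /=; ring.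
- move=> x /inNP[a [c ->]]; exists (2*(a*a+a*c-c*c)); rewrite /b /=; ring.
- exists (1,0), (1,-2); rewrite /b /=; split; [ring|split; lra].
- move=> x /inNP[a [c ->]] hne.
  have -> : b (a%:~R, c%:~R) (a%:~R, c%:~R) = (4*(a*a+a*c-c*c))%:~R by rewrite /b /=; ring.
  have hq : a*a+a*c-c*c != 0.
    apply/eqP => /norm_nz [ha hc]; apply: hne; by rewrite ha hc.
  have -> : (2:rat) = (2:int)%:~R by [].
  have -> : (-2:rat) = (-2:int)%:~R by [].
  have -> : (0:rat) = (0:int)%:~R by [].
  rewrite !inE !eqr_int; apply/negP => /or3P [] /eqP; move: hq => /eqP; lia.
- split.
  + move=> x [h1 h2]; rewrite m6E /inN /=.
    by split; rewrite !(rpredD, rpredM, rpred_nat).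
  + move=> y [h1 h2]; exists (13*y.1 - 8*y.2, -8 * y.1 + 5*y.2); split.
      by split; rewrite /= !(rpredD, rpredB, rpredN, rpredM, rpred_nat).
    rewrite m6E /=; case: y {h1 h2} => y1 y2 /=; congr (_,_); ring.
  + move=> [x1 x2] [y1 y2] _ _; rewrite !m6E /= => [[e1 e2]].
    congr (_,_).
      transitivity (13*(5*x1+8*x2) - 8*(8*x1+13*x2)); first ring.
      rewrite e1 e2; ring.
    transitivity (-8*(5*x1+8*x2) + 5*(8*x1+13*x2)); first ring.
    rewrite e1 e2; ring.
  + move=> [x1 x2] [y1 y2] _ _; rewrite !m6E /qadd /=; congr (_,_); ring.
  + move=> [x1 x2] [y1 y2] _ _; rewrite !m6E /b /=; ring.
- exact: cp.
- move=> [y1 y2] hy.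
  have u := hy (1,0) (conj (rpred1 _) (rpred0 _)).
  have v := hy (0,1) (conj (rpred0 _) (rpred1 _)).
  rewrite /b /= in u v.
  rewrite m6E /qadd /inN /=.
  have -> : 5 * y1 + 8 * y2 + y1 = 2 * (4 * y1 * 1 + 2 * y1 * 0 + 2 * y2 * 1 - 4 * y2 * 0)
     - (4 * y1 * 0 + 2 * y1 * 1 + 2 * y2 * 0 - 4 * y2 * 1) by ring.
  have -> : 8 * y1 + 13 * y2 + y2 = 3 * (4 * y1 * 1 + 2 * y1 * 0 + 2 * y2 * 1 - 4 * y2 * 0)
     - 2 * (4 * y1 * 0 + 2 * y1 * 1 + 2 * y2 * 0 - 4 * y2 * 1) by ring.
  by split; rewrite rpredB // ?rpredM // ?rpred_nat.
Qed.
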